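(* Assume $\sum_{j=1}^\infty\beta_j^2<\infty$ and $|\rho|<1$, and for $k=1,\dots,p$ let $\theta_k^{(p)}=\sum_{j=1}^p\beta_j\rho^{|k-j|}$. Then, as $p\to\infty$, $$\Big|\sum_{i,j,k=1}^p\big(\rho^{|i-j|}+\theta_i^{(p)}\theta_j^{(p)}\big)\big(\rho^{|i-k|}+\theta_i^{(p)}\theta_k^{(p)}\big)\big(\rho^{|k-j|}+\theta_k^{(p)}\theta_j^{(p)}\big)\Big|=o(p^{3/2}).$$ *)

(* Defs.v *)
From Stdlib Require Import Reals Lra Lia.
From Coquelicot Require Import Coquelicot.
Open Scope R_scope.

Definition absdiff (i j : nat) : nat := ((i - j) + (j - i))%nat.

Definition theta (beta : nat -> R) (rho : R) (p k : nat) : R :=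
  sum_n_m (fun j => beta j * rho ^ (absdiff k j)) 1 p.

Definition Mentry (beta : nat -> R) (rho : R) (p i j : nat) : R :=
  rho ^ (absdiff i j) + theta beta rho p i * theta beta rho p j.

Definition triple_sum (beta : nat -> R) (rho : R) (p : nat) : R :=
  sum_n_m (fun i => sum_n_m (fun j => sum_n_m (fun k =>
     Mentry beta rho p i j * Mentry beta rho p i k * Mentry beta rho p k j)
     1 p) 1 p) 1 p.

(* Main.v *)
Require Import Defs.
From Stdlib Require Import Reals Lra Lia Arith ZArith.
From Coquelicot Require Import Coquelicot.
Open Scope R_scope.

Lemma sP (u v : nat -> R) n m :
  sum_n_m (fun k => u k + v k) n m = sum_n_m u n m + sum_n_m v n m.
Proof. exact (sum_n_m_plus u v n m). Qed.
Lemma sMl a (u : nat -> R) n m :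
  sum_n_m (fun k => a * u k) n m = a * sum_n_m u n m.
Proof. exact (sum_n_m_mult_l a u n m). Qed.
Lemma sMr a (u : nat -> R) n m :
  sum_n_m (fun k => u k * a) n m = sum_n_m u n m * a.
Proof. exact (sum_n_m_mult_r a u n m). Qed.

Lemma sle (a b : nat -> R) n m :
  (forall k, (n <= k <= m)%nat -> a k <= b k) -> sum_n_m a n m <= sum_n_m b n m.
Proof.
  induction m as [|m IH]; intros H.
  - destruct n. rewrite !sum_n_n. apply H; lia.
    rewrite !sum_n_m_zero; try lia. apply Rle_refl.
  - destruct (Nat.eq_dec n (S m)) as [->|Hn].
    + rewrite !sum_n_n. apply H; lia.
    + destruct (le_lt_dec n (S m)).
      * rewrite !sum_n_Sm; try lia.
        apply Rplus_le_compat. apply IH; intros; apply H; lia. apply H; lia.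
      * rewrite !sum_n_m_zero; try lia. apply Rle_refl.
Qed.

Lemma s0 (a : nat -> R) n m : (forall k, 0 <= a k) -> 0 <= sum_n_m a n m.
Proof.
  intros H. apply Rle_trans with (sum_n_m (fun _ => 0) n m).
  rewrite sum_n_m_const. lra. apply sle. intros; apply H.
Qed.

Lemma sabs (a b : nat -> R) n m :
  (forall k, Rabs (a k) <= b k) -> Rabs (sum_n_m a n m) <= sum_n_m b n m.
Proof.
  intros H. eapply Rle_trans. exact (norm_sum_n_m a n m).
  apply sle. intros; apply H.
Qed.

Lemma sswap (f : nat -> nat -> R) a b c d :
  sum_n_m (fun i => sum_n_m (fun j => f i j) a b) c d =
  sum_n_m (fun j => sum_n_m (fun i => f i j) c d) a b.
Proof.
  induction d as [|d IH].
  - destruct c.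
    + rewrite sum_n_n. apply sum_n_m_ext; intros; now rewrite sum_n_n.
    + rewrite sum_n_m_zero; try lia.
      transitivity (sum_n_m (fun _ => zero : R) a b).
      now rewrite sum_n_m_const_zero.
      apply sum_n_m_ext; intros; now rewrite sum_n_m_zero; try lia.
  - destruct (le_lt_dec c (S d)).
    + rewrite sum_n_Sm; try lia.
      rewrite IH.
      change (plus ?x ?y) with (x + y).
      rewrite <- sP. apply sum_n_m_ext. intros j.
      rewrite sum_n_Sm; try lia. reflexivity.
    + rewrite sum_n_m_zero; try lia.
      transitivity (sum_n_m (fun _ => zero : R) a b).
      now rewrite sum_n_m_const_zero.
      apply sum_n_m_ext; intros; now rewrite sum_n_m_zero; try lia.
Qed.

Lemma prod2 (x y : nat -> R) n m a b :
  sum_n_m x n m * sum_n_m y a b =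
  sum_n_m (fun i => sum_n_m (fun j => x i * y j) a b) n m.
Proof.
  rewrite <- sMr. apply sum_n_m_ext; intros i. now rewrite sMl.
Qed.

Lemma CS (w x : nat -> R) n m : (forall k, 0 <= w k) ->
  (sum_n_m (fun k => w k * x k) n m)^2 <=
  sum_n_m w n m * sum_n_m (fun k => w k * x k ^ 2) n m.
Proof.
  intros Hw.
  assert (E1 : (sum_n_m (fun k => w k * x k) n m)^2 =
    sum_n_m (fun i => sum_n_m (fun j => (w i * x i) * (w j * x j)) n m) n m)
    by (rewrite <- prod2; ring).
  assert (E2 : sum_n_m w n m * sum_n_m (fun k => w k * x k ^ 2) n m =
    sum_n_m (fun i => sum_n_m (fun j => w i * (w j * x j ^2)) n m) n m)
    by (rewrite <- prod2; ring).
  assert (E3 : sum_n_m w n m * sum_n_m (fun k => w k * x k ^ 2) n m =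
    sum_n_m (fun i => sum_n_m (fun j => (w i * x i ^2) * w j) n m) n m)
    by (rewrite Rmult_comm, <- prod2; ring).
  cut (2 * sum_n_m (fun i => sum_n_m (fun j => (w i * x i) * (w j * x j)) n m) n m <=
    sum_n_m (fun i => sum_n_m (fun j => w i * (w j * x j ^2)) n m) n m +
    sum_n_m (fun i => sum_n_m (fun j => (w i * x i ^2) * w j) n m) n m); [lra|].
  rewrite <- sMl, <- sP. apply sle. intros i _.
  rewrite <- sMl, <- sP. apply sle. intros j _.
  specialize (Hw i) as Hi; specialize (Hw j) as Hj.
  assert (0 <= w i * w j * (x i - x j)^2) by (apply Rmult_le_pos; [apply Rmult_le_pos; assumption| apply pow2_ge_0]).
  assert (E : w i * (w j * x j ^ 2) + w i * x i ^ 2 * w j - 2 * (w i * x i * (w j * x j)) = w i * w j * (x i - x j)^2) by ring.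
  lra.
Qed.

Lemma pow_le1 r n : 0 <= r <= 1 -> r ^ n <= 1.
Proof. intros H. rewrite <- (pow1 n). apply pow_incr. lra. Qed.

Lemma geo0 r n : 0 <= r < 1 ->
  sum_n_m (fun j => r ^ j) 0 n = (1 - r ^ (S n)) / (1 - r).
Proof.
  intros H. induction n.
  - rewrite sum_n_n. simpl. field. lra.
  - rewrite sum_n_Sm; [|lia]. change (plus ?x ?y) with (x + y). rewrite IHn.
    simpl. field. lra.
Qed.

Lemma geo r k n : 0 <= r < 1 ->
  sum_n_m (fun j => r ^ (absdiff k j)) 0 n <= (1 + r - r ^ (S k)) / (1 - r).
Proof.
  intros H. revert n. induction k; intros n.
  - rewrite (sum_n_m_ext _ (fun j => r ^ j)).
    2:{ intros j. unfold absdiff. f_equal. lia. }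
    rewrite geo0 by lra. simpl. apply Rmult_le_compat_r.
    apply Rlt_le, Rinv_0_lt_compat; lra.
    assert (0 <= r ^ n) by (apply pow_le; lra). nra.
  - assert (0 <= r ^ S (S k)) by (apply pow_le; lra).
    assert (r ^ S (S k) <= r) by (simpl; assert (r ^ k <= 1) by (apply pow_le1; lra);
        assert (0 <= r ^ k) by (apply pow_le; lra); nra).
    assert (1 <= 1 / (1 - r)) by (apply Rle_div_r; lra).
    destruct n.
    + rewrite sum_n_n. assert (r ^ absdiff (S k) 0 <= 1) by (apply pow_le1; lra).
      apply Rle_trans with 1; auto.
      unfold Rdiv. apply Rle_trans with (1 / (1 - r)); auto.
      unfold Rdiv. apply Rmult_le_compat_r. apply Rlt_le, Rinv_0_lt_compat; lra. lra.
    + rewrite sum_Sn_m; [|lia]. change (plus ?x ?y) with (x + y).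
      rewrite <- sum_n_m_S.
      rewrite (sum_n_m_ext (fun j => r ^ absdiff (S k) (S j)) (fun j => r ^ absdiff k j));
        [|intros j; f_equal; unfold absdiff; lia].
      replace (absdiff (S k) 0) with (S k) by (unfold absdiff; lia).
      specialize (IHk n).
      apply Rle_trans with (r ^ S k + (1 + r - r ^ S k) / (1 - r)). lra.
      apply Req_le. simpl. field. lra.
Qed.

Lemma geoC r k p : 0 <= r < 1 ->
  sum_n_m (fun j => r ^ (absdiff k j)) 1 p <= (1 + r) / (1 - r).
Proof.
  intros H. apply Rle_trans with (sum_n_m (fun j => r ^ (absdiff k j)) 0 p).
  - rewrite (sum_Sn_m _ 0 p) by lia. change (plus ?x ?y) with (x + y).
    assert (0 <= r ^ absdiff k 0) by (apply pow_le; lra). lra.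
  - eapply Rle_trans. apply geo; auto.
    unfold Rdiv. apply Rmult_le_compat_r. apply Rlt_le, Rinv_0_lt_compat; lra.
    assert (0 <= r ^ S k) by (apply pow_le; lra). lra.
Qed.

Section S.
Variables (beta : nat -> R) (rho B : R) (p : nat).
Hypothesis Hr : Rabs rho < 1.
Hypothesis HB : sum_n_m (fun j => beta j ^ 2) 1 p <= B.
Let r := Rabs rho.
Let C := (1 + r) / (1 - r).
Let u k := Rabs (theta beta rho p k).

Lemma r01 : 0 <= r < 1. Proof. unfold r; split; [apply Rabs_pos| lra]. Qed.
Lemma C0 : 0 <= C.
Proof. pose proof r01. unfold C. apply Rle_div_r; lra. Qed.
Lemma wC k : sum_n_m (fun j => r ^ absdiff k j) 1 p <= C.
Proof. apply geoC, r01. Qed.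
Lemma w0 k j : 0 <= r ^ absdiff k j.
Proof. pose proof r01. apply pow_le; lra. Qed.
Lemma w1 k j : r ^ absdiff k j <= 1.
Proof. pose proof r01. apply pow_le1; lra. Qed.

Lemma u_le k : u k <= sum_n_m (fun j => r ^ absdiff k j * Rabs (beta j)) 1 p.
Proof.
  unfold u, theta. apply sabs. intros j. rewrite Rabs_mult, <- RPow_abs. fold r. lra.
Qed.

Lemma u2_le k : u k ^ 2 <= C * sum_n_m (fun j => r ^ absdiff k j * beta j ^ 2) 1 p.
Proof.
  pose proof (u_le k).
  assert (0 <= u k) by apply Rabs_pos.
  pose proof (CS (fun j => r ^ absdiff k j) (fun j => Rabs (beta j)) 1 p (w0 k)) as H1.
  cbv beta in H1.
  rewrite (sum_n_m_ext (fun k0 => r ^ absdiff k k0 * Rabs (beta k0) ^ 2)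
       (fun j => r ^ absdiff k j * beta j ^ 2)) in H1;
  [| intros j; rewrite pow2_abs; reflexivity].
  assert (0 <= sum_n_m (fun j => r ^ absdiff k j * beta j ^ 2) 1 p).
  { apply s0. intros j. apply Rmult_le_pos. apply w0. apply pow2_ge_0. }
  pose proof (wC k).
  set (X := sum_n_m (fun j : nat => r ^ absdiff k j * Rabs (beta j)) 1 p) in *.
  set (Y := sum_n_m (fun j : nat => r ^ absdiff k j * beta j ^ 2) 1 p) in *.
  set (W := sum_n_m (fun j : nat => r ^ absdiff k j) 1 p) in *.
  assert (u k ^ 2 <= X ^ 2) by (apply pow_incr; lra).
  assert (W * Y <= C * Y) by (apply Rmult_le_compat_r; lra).
  lra.
Qed.

Lemma sb2 : sum_n_m (fun j => beta j ^ 2) 1 p >= 0.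
Proof. apply Rle_ge, s0. intros; apply pow2_ge_0. Qed.

Lemma u2_B k : u k ^ 2 <= C * B.
Proof.
  eapply Rle_trans. apply u2_le. apply Rmult_le_compat_l. apply C0.
  eapply Rle_trans; [|apply HB]. apply sle. intros j _.
  pose proof (w1 k j). pose proof (pow2_ge_0 (beta j)). nra.
Qed.

Lemma V_le : sum_n_m (fun k => u k ^ 2) 1 p <= C * C * B.
Proof.
  eapply Rle_trans.
  apply (sle _ (fun k => C * sum_n_m (fun j => r ^ absdiff k j * beta j ^ 2) 1 p)).
  intros; apply u2_le.
  rewrite sMl, sswap. rewrite Rmult_assoc. apply Rmult_le_compat_l. apply C0.
  eapply Rle_trans; [|apply Rmult_le_compat_l; [apply C0|apply HB]].
  rewrite <- sMl. apply sle. intros j _.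
  rewrite sMr. apply Rmult_le_compat_r. apply pow2_ge_0.
  rewrite (sum_n_m_ext _ (fun i => r ^ absdiff j i)). apply wC.
  intros i. f_equal. unfold absdiff. lia.
Qed.

Lemma T_le : (sum_n_m u 1 p) ^ 2 <= INR p * sum_n_m (fun k => u k ^ 2) 1 p.
Proof.
  pose proof (CS (fun _ => 1) u 1 p (fun _ => Rle_0_1)) as H.
  rewrite sum_n_m_const in H.
  replace (S p - 1)%nat with p in H by lia. cbv beta in H.
  assert (E1 : sum_n_m (fun k => 1 * u k) 1 p = sum_n_m u 1 p).
  { apply sum_n_m_ext. intros; apply Rmult_1_l. }
  assert (E2 : sum_n_m (fun k => 1 * u k ^ 2) 1 p = sum_n_m (fun k => u k ^ 2) 1 p).
  { apply sum_n_m_ext. intros; apply Rmult_1_l. }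
  rewrite E1, E2 in H.
  lra.
Qed.


Let a i j := r ^ absdiff i j + u i * u j.
Let K := 1 + C * B.

Lemma u0 k : 0 <= u k. Proof. apply Rabs_pos. Qed.
Lemma a0 i j : 0 <= a i j.
Proof. unfold a. pose proof (w0 i j). pose proof (u0 i). pose proof (u0 j). nra. Qed.
Lemma aK i j : a i j <= K.
Proof.
  unfold a, K. pose proof (w1 i j). pose proof (u2_B i). pose proof (u2_B j).
  pose proof (pow2_ge_0 (u i - u j)). simpl in *. nra.
Qed.
Lemma Ma i j : Rabs (Mentry beta rho p i j) <= a i j.
Proof.
  unfold Mentry, a, u. eapply Rle_trans. apply Rabs_triang.
  rewrite Rabs_mult, <- RPow_abs. fold r. lra.
Qed.

Lemma Ai i : sum_n_m (fun j => a i j) 1 p <= C + u i * sum_n_m u 1 p.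
Proof.
  unfold a. rewrite sP, sMl. pose proof (wC i). lra.
Qed.

Lemma main_bound : Rabs (triple_sum beta rho p) <=
  INR p * (K * (2 * C ^ 2 + 2 * (C * C * B) ^ 2)).
Proof.
  set (T := sum_n_m u 1 p). set (V := sum_n_m (fun k => u k ^ 2) 1 p).
  assert (HV : V <= C * C * B) by apply V_le.
  assert (HT : T ^ 2 <= INR p * V) by apply T_le.
  assert (V0 : 0 <= V) by (apply s0; intros; apply pow2_ge_0).
  assert (T0 : 0 <= T) by (apply s0; intros; apply u0).
  assert (K0 : 0 <= K) by (pose proof (aK 0 0); pose proof (a0 0 0); lra).
  assert (Hp : 0 <= INR p) by apply pos_INR.
  unfold triple_sum.
  eapply Rle_trans.
  { apply (sabs _ (fun i => sum_n_m (fun j => sum_n_m (fun k => K * (a i j * a i k)) 1 p) 1 p)).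
    intros i. apply sabs. intros j. apply sabs. intros k.
    rewrite !Rabs_mult.
    pose proof (Ma i j); pose proof (Ma i k); pose proof (Ma k j).
    pose proof (a0 i j); pose proof (a0 i k); pose proof (aK k j).
    pose proof (Rabs_pos (Mentry beta rho p i j)).
    pose proof (Rabs_pos (Mentry beta rho p i k)).
    pose proof (Rabs_pos (Mentry beta rho p k j)).
    apply Rle_trans with (a i j * a i k * Rabs (Mentry beta rho p k j)).
    apply Rmult_le_compat_r; auto. apply Rmult_le_compat; auto.
    rewrite (Rmult_comm K). apply Rmult_le_compat_l. nra. lra. }
  eapply Rle_trans.
  { apply (sle _ (fun i => K * (2 * C ^ 2 + 2 * T ^ 2 * u i ^ 2))). intros i _.
    rewrite (sum_n_m_ext _ (fun j => K * (a i j * sum_n_m (fun k => a i k) 1 p)));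
      [| intros j; rewrite <- sMl, <- sMl; reflexivity].
    rewrite sMl, sMr. apply Rmult_le_compat_l; auto.
    pose proof (Ai i). fold T in H.
    assert (0 <= sum_n_m (fun j => a i j) 1 p) by (apply s0; intros; apply a0).
    pose proof (u0 i). pose proof (C0).
    assert (sum_n_m (fun j => a i j) 1 p ^ 2 <= (C + u i * T) ^ 2) by (apply pow_incr; lra).
    change (sum_n_m (a i) 1 p) with (sum_n_m (fun j => a i j) 1 p).
    set (X := sum_n_m (fun j => a i j) 1 p) in *.
    pose proof (pow2_ge_0 (C - u i * T)).
    assert ((C + u i * T) ^ 2 <= 2 * C ^ 2 + 2 * T ^ 2 * u i ^ 2) by nra.
    simpl in *. lra. }
  rewrite sMl, sP, sum_n_m_const, sMl.
  replace (S p - 1)%nat with p by lia. fold V.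
  assert (T ^ 2 * V <= INR p * V * V) by nra.
  assert (V * V <= (C * C * B) ^ 2) by (simpl; nra).
  assert (INR p * (V * V) <= INR p * (C * C * B) ^ 2) by (apply Rmult_le_compat_l; lra).
  replace (INR p * (K * (2 * C ^ 2 + 2 * (C * C * B) ^ 2))) with
    (K * (INR p * (2 * C ^ 2) + 2 * (INR p * (C * C * B) ^ 2))) by ring.
  apply Rmult_le_compat_l; auto. lra.
Qed.
End S.
Lemma partial_le (g : nat -> R) : ex_series g -> (forall n, 0 <= g n) ->
  forall n, sum_n g n <= Series g.
Proof.
  intros Hg Hp n. apply is_lim_seq_incr_compare.
  apply Series_correct in Hg. exact Hg.
  intros m. rewrite sum_Sn. change (plus ?x ?y) with (x + y). specialize (Hp (S m)). lra.
Qed.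

Lemma HBall (beta : nat -> R) (Hbeta : ex_series (fun j => (beta (S j)) ^ 2)) p :
  sum_n_m (fun j => beta j ^ 2) 1 p <= Series (fun j => (beta (S j)) ^ 2).
Proof.
  pose proof (partial_le _ Hbeta (fun n => pow2_ge_0 _)) as H.
  destruct p.
  - rewrite sum_n_m_zero by lia. specialize (H 0%nat). unfold sum_n in H.
    rewrite sum_n_n in H. pose proof (pow2_ge_0 (beta 1%nat)). change zero with 0. lra.
  - rewrite <- sum_n_m_S. apply H.
Qed.

Lemma Rpow32 x : 0 < x -> Rpower x (3/2) = x * sqrt x.
Proof.
  intros Hx. replace (3/2) with (1 + /2) by field.
  rewrite Rpower_plus, Rpower_1, Rpower_sqrt; auto.
Qed.

Theorem mainTheorem15 (beta : nat -> R) (rho : R)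
  (Hbeta : ex_series (fun j => (beta (S j)) ^ 2))
  (Hrho : Rabs rho < 1) :
  is_lim_seq (fun p => Rabs (triple_sum beta rho p) / Rpower (INR p) (3 / 2)) 0.
Proof.
  set (B := Series (fun j => (beta (S j)) ^ 2)).
  pose proof (fun p => main_bound beta rho B p Hrho (HBall beta Hbeta p)) as HM.
  match type of HM with forall p, _ <= INR p * ?D0 => set (D := D0) in HM end.
  set (E := Rabs D + 1).
  assert (E0 : 0 < E) by (unfold E; pose proof (Rabs_pos D); lra).
  assert (HM' : forall p, Rabs (triple_sum beta rho p) <= INR p * E).
  { intros p. eapply Rle_trans. apply HM. apply Rmult_le_compat_l. apply pos_INR.
    unfold E. pose proof (Rle_abs D). lra. }
  apply is_lim_seq_spec. intros eps.
  set (x := (E / eps) ^ 2).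
  assert (x0 : 0 <= x) by apply pow2_ge_0.
  destruct (archimed x) as [Hu _].
  assert (Hz : (0 < up x)%Z) by (apply lt_IZR; lra).
  exists (S (Z.to_nat (up x))). intros n Hn.
  assert (Hn' : x < INR n).
  { apply Rlt_le_trans with (IZR (up x)); auto.
    rewrite <- (Z2Nat.id (up x)) by lia. rewrite <- INR_IZR_INZ.
    apply le_INR. lia. }
  assert (npos : 0 < INR n) by lra.
  assert (sq : E / eps < sqrt (INR n)).
  { rewrite <- (sqrt_pow2 (E / eps)).
    apply sqrt_lt_1; unfold x in *; lra. apply Rlt_le, Rdiv_lt_0_compat; auto. apply cond_pos. }
  assert (sqpos : 0 < sqrt (INR n)) by (apply sqrt_lt_R0; lra).
  rewrite Rpow32 by auto. rewrite Rminus_0_r.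
  assert (F0 : 0 <= Rabs (triple_sum beta rho n) / (INR n * sqrt (INR n))).
  { apply Rle_mult_inv_pos. apply Rabs_pos. apply Rmult_lt_0_compat; auto. }
  rewrite Rabs_pos_eq by auto.
  apply Rle_lt_trans with (E / sqrt (INR n)).
  { replace (E / sqrt (INR n)) with ((INR n * E) / (INR n * sqrt (INR n))) by (field; lra).
    unfold Rdiv. apply Rmult_le_compat_r; auto.
    apply Rlt_le, Rinv_0_lt_compat, Rmult_lt_0_compat; auto. }
  pose proof (cond_pos eps).
  apply (Rmult_lt_reg_r (sqrt (INR n))); auto.
  replace (E / sqrt (INR n) * sqrt (INR n)) with E by (field; lra).
  apply (Rmult_lt_reg_r (/ eps)). apply Rinv_0_lt_compat; auto.
  replace (eps * sqrt (INR n) * / eps) with (sqrt (INR n)) by (field; lra).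
  exact sq.
Qed.
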